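(* Let $G$ be a graph that has an EPG-representation in a grid with $h$ rows in which every grid-edge is used by at most $c$ vertex-paths. Then the pathwidth of $G$ satisfies $pw(G)\le c(3h-1)-1$.
   Context: The $w\times h$-grid consists of all grid-points $(i,j)$ with integer coordinates $1\le i\le w$, $1\le j\le h$ (so it has $h$ rows), and all grid-edges joining grid-points at distance $1$. An EPG-representation of a graph $G$ assigns to each vertex $v$ a path $\mathrm{path}(v)$ in the grid such that $(v,w)$ is an edge of $G$ if and only if $\mathrm{path}(v)$ and $\mathrm{path}(w)$ share a grid-edge. The pathwidth $pw(G)$ is the smallest $k$ such that $G$ is a subgraph of a $(k+1)$-colourable interval graph (an interval graph is the intersection graph of a family of closed intervals of the real line). *)

(* Defs.v *)
From HB Require Import structures.
From mathcomp Require Import all_boot.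
From Stdlib Require Reals.
Set Implicit Arguments. Unset Strict Implicit. Unset Printing Implicit Defensive.

Definition simple_graph (T : finType) (e : rel T) : Prop :=
  symmetric e /\ irreflexive e.

Definition gpoint := (nat * nat)%type.

Definition in_grid (w h : nat) (p : gpoint) : bool :=
  [&& 0 < p.1, p.1 <= w, 0 < p.2 & p.2 <= h].

Definition gadj (p q : gpoint) : bool :=
  ((p.1 == q.1) && ((p.2 == q.2.+1) || (q.2 == p.2.+1))) ||
  ((p.2 == q.2) && ((p.1 == q.1.+1) || (q.1 == p.1.+1))).

Definition grid_edge (w h : nat) (a b : gpoint) : bool :=
  [&& in_grid w h a, in_grid w h b & gadj a b].

Definition grid_path (w h : nat) (s : seq gpoint) : bool :=
  match s with
  | [::] => false
  | x :: s' => [&& all (in_grid w h) s, uniq s & path gadj x s']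
  end.

Definition uses_edge (s : seq gpoint) (a b : gpoint) : bool :=
  ((a, b) \in zip s (behead s)) || ((b, a) \in zip s (behead s)).

Definition share_edge (s t : seq gpoint) : Prop :=
  exists a b : gpoint, uses_edge s a b /\ uses_edge t a b.

Definition EPG_rep (T : finType) (e : rel T) (w h : nat) (P : T -> seq gpoint) : Prop :=
  (forall v, grid_path w h (P v)) /\
  (forall v u, v != u -> (e v u <-> share_edge (P v) (P u))).

Definition edge_congestion_le (T : finType) (w h : nat) (P : T -> seq gpoint) (c : nat) : Prop :=
  forall a b, grid_edge w h a b -> #|[pred v | uses_edge (P v) a b]| <= c.

Definition intervals_meet (U : Type) (lo hi : U -> Reals.Rdefinitions.R) (u u' : U) : Prop :=
  Reals.Rdefinitions.Rle (lo u) (hi u') /\ Reals.Rdefinitions.Rle (lo u') (hi u).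

Definition subgraph_of_colourable_interval_graph (T : finType) (e : rel T) (n : nat) : Prop :=
  exists (U : finType) (lo hi : U -> Reals.Rdefinitions.R) (col : U -> 'I_n) (phi : T -> U),
    (forall u, Reals.Rdefinitions.Rle (lo u) (hi u)) /\
    (forall u u', u != u' -> intervals_meet lo hi u u' -> col u != col u') /\
    injective phi /\
    (forall x y, e x y -> phi x != phi y /\ intervals_meet lo hi (phi x) (phi y)).

(* pw(G) <= k  iff  G is a subgraph of a (k+1)-colourable interval graph
   (the property is monotone in k); stated with n = k+1 colours. *)
Definition pathwidth_le_colours (T : finType) (e : rel T) (n : nat) : Prop :=
  subgraph_of_colourable_interval_graph e n.

(* Main.v *)
Require Import Defs.
From HB Require Import structures.
From mathcomp Require Import all_boot zify.
From Stdlib Require Reals.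
Set Implicit Arguments. Unset Strict Implicit. Unset Printing Implicit Defensive.

Lemma gadj_sym p q : gadj p q = gadj q p.
Proof. case: p q => [a b] [c d]; rewrite /gadj /=; apply/idP/idP; lia. Qed.

Lemma gadj_x p q : gadj p q -> (q.1 <= p.1.+1) && (p.1 <= q.1.+1).
Proof. case: p q => [a b] [c d]; rewrite /gadj /=; lia. Qed.

Lemma zip_path (r : rel gpoint) x s a b : path r x s -> (a, b) \in zip (x :: s) s ->
  [/\ r a b, a \in x :: s & b \in x :: s].
Proof.
elim: s x => [|y s IH] x //= /andP[rxy ps]; rewrite inE => /orP[/eqP[-> ->]|H].
  by split; rewrite // !inE eqxx ?orbT.
have [h1 h2 h3] := IH y ps H.
by split => //; rewrite inE ?h2 ?h3 orbT.
Qed.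

Lemma incident (s : seq gpoint) x : 1 < size s -> x \in s ->
  exists y, ((x, y) \in zip s (behead s)) || ((y, x) \in zip s (behead s)).
Proof.
elim: s => [|a s IH] //; case: s IH => [|b t] IH //= _.
rewrite inE => /orP[/eqP->|xin]; first by exists b; rewrite /= inE eqxx.
case: t IH xin => [|c t] IH.
  by rewrite inE => /eqP ->; exists a; apply/orP; right; rewrite inE eqxx.
move=> xin; have [y Hy] := IH isT xin; exists y.
by rewrite /= !inE in Hy *; case/orP: Hy => ->; rewrite ?orbT.
Qed.

Lemma ivt x s p : path gadj x s -> (exists2 a, a \in x :: s & a.1 <= p) ->
  (exists2 b, b \in x :: s & p <= b.1) -> exists2 c, c \in x :: s & c.1 = p.
Proof.
elim: s x => [|y s IH] x /=.
  move=> _ [a] /[!inE] /eqP -> h1 [b] /[!inE] /eqP -> h2.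
  by exists x; rewrite ?inE ?eqxx //; lia.
move=> /andP[gxy ps] [a ain ha] [b bin hb].
have [ex|nx] := eqVneq x.1 p; first by exists x; rewrite ?inE ?eqxx.
have /andP[hxy1 hxy2] := gadj_x gxy.
case: (ltngtP x.1 p) => hxp; last by rewrite hxp eqxx in nx.
- have [c cin hc] : exists2 c, c \in y :: s & c.1 = p.
    apply: IH => //. exists y; first by rewrite inE eqxx. exact: leq_trans hxy1 hxp.
    exists b => //; move: bin; rewrite inE => /orP[/eqP E|//]; subst; lia.
  by exists c => //; rewrite inE cin orbT.
- have [c cin hc] : exists2 c, c \in y :: s & c.1 = p.
    apply: IH => //; last by exists y; [rewrite inE eqxx | rewrite -ltnS (leq_trans hxp hxy2)].
    exists a => //; move: ain; rewrite inE => /orP[/eqP E|//]; subst; lia.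
  by exists c => //; rewrite inE cin orbT.
Qed.


Definition Ewin (h p : nat) : seq (gpoint * gpoint) :=
  [seq ((p.-1, j), (p, j)) | j <- iota 1 h] ++ [seq ((p, j), (p.+1, j)) | j <- iota 1 h]
  ++ [seq ((p, j), (p, j.+1)) | j <- iota 1 h.-1].

Lemma size_Ewin h p : 0 < h -> size (Ewin h p) = 3 * h - 1.
Proof. move=> h0; rewrite /Ewin !size_cat !size_map !size_iota; lia. Qed.

Lemma win w h q r : in_grid w h q -> in_grid w h r -> gadj q r ->
  exists2 e, e \in Ewin h q.1 & (e == (q, r)) || (e == (r, q)).
Proof.
case: q r => [q1 q2] [r1 r2]; rewrite /in_grid /gadj /= => Hq Hr.
case/orP => /andP[/eqP E /orP[/eqP F|/eqP F]].
- subst r1 q2. exists ((q1, r2), (q1, r2.+1)); last by rewrite eqxx orbT.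
  rewrite /Ewin !mem_cat; apply/orP; right; apply/orP; right.
  apply: (map_f (fun j => ((q1, j), (q1, j.+1)))); rewrite mem_iota; lia.
- subst r1 r2. exists ((q1, q2), (q1, q2.+1)); last by rewrite eqxx.
  rewrite /Ewin !mem_cat; apply/orP; right; apply/orP; right.
  apply: (map_f (fun j => ((q1, j), (q1, j.+1)))); rewrite mem_iota; lia.
- subst r2 q1. exists ((r1, q2), (r1.+1, q2)); last by rewrite eqxx orbT.
  rewrite /Ewin !mem_cat; apply/orP; left.
  apply: (map_f (fun j => (((r1.+1).-1, j), (r1.+1, j)))); rewrite mem_iota; lia.
- subst r2 r1. exists ((q1, q2), (q1.+1, q2)); last by rewrite eqxx.
  rewrite /Ewin !mem_cat; apply/orP; right; apply/orP; left.
  apply: (map_f (fun j => ((q1, j), (q1.+1, j)))); rewrite mem_iota; lia.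
Qed.

Fixpoint fmin d (s : seq gpoint) := if s is a :: t then minn a.1 (fmin d t) else d.
Fixpoint fmax d (s : seq gpoint) := if s is a :: t then maxn a.1 (fmax d t) else d.
Definition smin (s : seq gpoint) := fmin (head (0,0) s).1 s.
Definition smax (s : seq gpoint) := fmax (head (0,0) s).1 s.

Lemma fmin_gen d (s : seq gpoint) :
  (forall a, a \in s -> fmin d s <= a.1) /\
  (fmin d s = d \/ exists2 a, a \in s & a.1 = fmin d s).
Proof.
elim: s => [|x s [IH1 IH2]] /=; first by split; [move=> a; rewrite in_nil | left].
split.
  move=> a; rewrite inE => /orP[/eqP->|ain]; first exact: geq_minl.
  exact: leq_trans (geq_minr _ _) (IH1 a ain).
case: (leqP x.1 (fmin d s)) => H.
  by right; exists x; rewrite ?inE ?eqxx.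
case: IH2 => [E|[a ain E]]; first by left.
by right; exists a; rewrite // inE ain orbT.
Qed.

Lemma fmax_gen d (s : seq gpoint) :
  (forall a, a \in s -> a.1 <= fmax d s) /\
  (fmax d s = d \/ exists2 a, a \in s & a.1 = fmax d s).
Proof.
elim: s => [|x s [IH1 IH2]] /=; first by split; [move=> a; rewrite in_nil | left].
split.
  move=> a; rewrite inE => /orP[/eqP->|ain]; first exact: leq_maxl.
  exact: leq_trans (IH1 a ain) (leq_maxr _ _).
case: (leqP (fmax d s) x.1) => H.
  by right; exists x; rewrite ?inE ?eqxx.
case: IH2 => [E|[a ain E]]; first by left.
by right; exists a; rewrite // inE ain orbT.
Qed.

Lemma smin_le s a : a \in s -> smin s <= a.1.
Proof. exact: (fmin_gen _ s).1. Qed.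
Lemma smax_ge s a : a \in s -> a.1 <= smax s.
Proof. exact: (fmax_gen _ s).1. Qed.
Lemma smin_in s : s != [::] -> exists2 a, a \in s & a.1 = smin s.
Proof.
case: s => [|x s] // _; case: (fmin_gen x.1 (x :: s)).2 => // E.
by exists x; rewrite ?inE ?eqxx // /smin E.
Qed.
Lemma smax_in s : s != [::] -> exists2 a, a \in s & a.1 = smax s.
Proof.
case: s => [|x s] // _; case: (fmax_gen x.1 (x :: s)).2 => // E.
by exists x; rewrite ?inE ?eqxx // /smax E.
Qed.

Lemma gp_in w h s a : grid_path w h s -> a \in s -> in_grid w h a.
Proof. by case: s => [|x s] // /and3P[/allP H _ _] /H. Qed.

Lemma uses_grid w h s a b : grid_path w h s -> uses_edge s a b -> grid_edge w h a b.
Proof.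
case: s => [|x s] // gp; have /and3P[_ _ ps] := gp.
rewrite /uses_edge /= => /orP[] /(zip_path ps) [g ain bin].
  by rewrite /grid_edge (gp_in gp ain) (gp_in gp bin).
by rewrite /grid_edge (gp_in gp ain) (gp_in gp bin) gadj_sym.
Qed.

Lemma uses_mem s a b : uses_edge s a b -> (a \in s) && (1 < size s).
Proof.
case: s => [|x [|y s]] //; rewrite /uses_edge => H.
have pT : path (fun _ _ : gpoint => true) x (y :: s).
  by clear H; elim: (y :: s) x => //= z t IH x; apply: IH.
by rewrite andbT; case/orP: H => /(zip_path pT) [_ ? ?].
Qed.

Lemma card_has (T : finType) (X : Type) (f : T -> X -> bool) (E : seq X) c :
  (forall x, #|[pred v | f v x]| <= c) -> #|[pred v | has (f v) E]| <= c * size E.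
Proof.
move=> Hc; elim: E => [|x E IH] /=.
  by rewrite muln0 leqn0; apply/eqP/eq_card0 => v.
have -> : #|[pred v | f v x || has (f v) E]| =
          #|[predU [pred v | f v x] & [pred v | has (f v) E]]| by apply: eq_card.
rewrite mulnS; apply: leq_trans (_ : _ <= #|[pred v | f v x]| + #|[pred v | has (f v) E]|) _.
  by rewrite -cardUI leq_addr.
exact: leq_add.
Qed.

Lemma colour_lemma (U : finType) (lo hi : U -> nat) (k : nat) :
  0 < k -> (forall u, lo u <= hi u) ->
  (forall u, #|[pred u' | (lo u' <= lo u) && (lo u <= hi u')]| <= k) ->
  exists col : U -> 'I_k, forall u u', u != u' -> lo u <= hi u' -> lo u' <= hi u ->
     col u != col u'.
Proof.
move=> k0 Hlh Hk.
suff H : forall n (S : {set U}), #|S| <= n -> exists col : U -> 'I_k,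
   forall u u', u \in S -> u' \in S -> u != u' -> lo u <= hi u' -> lo u' <= hi u ->
     col u != col u'.
  have [col Hc] := H _ [set: U] (leqnn _).
  by exists col => u u'; apply: Hc; rewrite in_setT.
elim=> [|n IH] S.
  rewrite leqn0 => /eqP/cards0_eq ->.
  by exists (fun _ => Ordinal k0) => u u'; rewrite in_set0.
move=> HS.
have [S0|[u0 u0S]] := set_0Vmem S.
  by exists (fun _ => Ordinal k0) => u u'; rewrite S0 in_set0.
case: (arg_maxnP lo u0S) => u uS0 umax.
have uS : u \in S := uS0.
have HS' : #|S :\ u| <= n by move: HS; rewrite (cardsD1 u S) uS /= add1n ltnS.
have [col' Hc'] := IH (S :\ u) HS'.
pose N := [set u' in S :\ u | (lo u <= hi u') && (lo u' <= hi u)].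
have HN : #|N| < k.
  have sub : u |: N \subset [pred u' | (lo u' <= lo u) && (lo u <= hi u')].
    apply/subsetP => x; rewrite !inE => /orP[/eqP->|/andP[/andP[_ xS] /andP[h1 h2]]].
      by rewrite leqnn Hlh.
    have := umax x xS; rewrite /= => ->; exact: h1.
  have := subset_leq_card sub; have uN : u \notin N by rewrite !inE eqxx.
  rewrite cardsU1 uN /= add1n => h.
  exact: leq_trans h (Hk u).
have [c0 c0P] : exists c0 : 'I_k, c0 \notin col' @: N.
  case: (pickP [pred i | i \notin col' @: N]) => [i Hi|Hn]; first by exists i.
  have : [set: 'I_k] \subset col' @: N.
    by apply/subsetP => i _; move: (Hn i) => /= /negbFE.
  move/subset_leq_card; rewrite cardsT card_ord => h.
  have := leq_trans h (leq_imset_card _ _); lia.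
exists (fun x => if x == u then c0 else col' x) => x y xS yS xy h1 h2.
have [ex|xu] := eqVneq x u; have [ey|yu] := eqVneq y u.
- by subst; rewrite eqxx in xy.
- subst x; apply/eqP => E; move: c0P; rewrite E; move/negP; apply.
  by apply/imsetP; exists y => //; rewrite !inE yu yS h1 h2.
- subst y; apply/eqP => E; move: c0P; rewrite -E; move/negP; apply.
  by apply/imsetP; exists x => //; rewrite !inE xu xS h1 h2.
- by apply: Hc' => //; rewrite !inE ?xu ?yu.
Qed.


Theorem theorem6 (T : finType) (e : rel T) (w h c : nat) (P : T -> seq gpoint) :
  simple_graph e -> 0 < h -> 0 < c ->
  EPG_rep e w h P -> edge_congestion_le w h P c ->
  pathwidth_le_colours e (c * (3 * h - 1)).
Proof.
move=> [esym eirr] h0 c0 [Hgp Hrep] Hcong.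
pose nt v := 1 < size (P v).
pose lo v := if nt v then smin (P v) else w.+1 + enum_rank v.
pose hi v := if nt v then smax (P v) else w.+1 + enum_rank v.
have ne v : nt v -> P v != [::] by rewrite /nt; case: (P v).
have lo_le v a : nt v -> a \in P v -> (lo v <= a.1) && (a.1 <= hi v).
  by move=> ntv ain; rewrite /lo /hi ntv (smin_le ain) (smax_ge ain).
have lo_ex v : nt v -> exists2 a, a \in P v & a.1 = lo v.
  by move=> ntv; rewrite /lo ntv; apply: smin_in; apply: ne.
have hi_ex v : nt v -> exists2 a, a \in P v & a.1 = hi v.
  by move=> ntv; rewrite /hi ntv; apply: smax_in; apply: ne.
have lohi v : lo v <= hi v.
  case ntv : (nt v); last by rewrite /lo /hi ntv.
  have [a ain _] := lo_ex v ntv; have /andP[] := lo_le v a ntv ain; exact: leq_trans.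
have hi_le v : nt v -> hi v <= w.
  move=> ntv; have [a ain <-] := hi_ex v ntv.
  by have := gp_in (Hgp v) ain; rewrite /in_grid => /and4P[].
have kpos : 0 < c * (3 * h - 1) by rewrite muln_gt0 c0 /=; lia.
have key u : #|[pred u' | (lo u' <= lo u) && (lo u <= hi u')]| <= c * (3 * h - 1).
  case ntu : (nt u).
  - set p := lo u.
    have pw : p <= w by apply: leq_trans (lohi u) (hi_le u ntu).
    apply: leq_trans (_ : _ <= #|[pred v | has (fun e => uses_edge (P v) e.1 e.2) (Ewin h p)]|) _.
      apply: subset_leq_card; apply/subsetP => v; rewrite !inE => /andP[h1 h2].
      have ntv : nt v.
        case ntv : (nt v) => //; move: h1; rewrite /lo ntv; lia.
      have [a ain ea] := lo_ex v ntv; have [b bin eb] := hi_ex v ntv.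
      have gp := Hgp v.
      have [q qin qp] : exists2 q, q \in P v & q.1 = p.
        move: gp ain bin; case: (P v) => [|x s] // /and3P[_ _ ps] ain bin.
        apply: ivt ps _ _; [exists a => //; rewrite ea | exists b => //; rewrite eb] => //.
      have [y Hy] := incident ntv qin.
      have [e1 He1 He2] : exists2 e1, e1 \in Ewin h p & uses_edge (P v) e1.1 e1.2.
        have [gq iq iy] : [/\ gadj q y, q \in P v & y \in P v].
          move: gp Hy; case: (P v) => [|x s] // /and3P[_ _ ps] /orP[] /(zip_path ps) [g i1 i2].
            by [].
          by rewrite gadj_sym.
        have [e1 e1in He1] := win (gp_in gp iq) (gp_in gp iy) gq.
        exists e1; first by rewrite -qp.
        by case/orP: He1 => /eqP -> /=; rewrite /uses_edge // orbC.
      by apply/hasP; exists e1.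
    rewrite -(size_Ewin p h0); apply: card_has => e1.
    case: (pickP [pred v | uses_edge (P v) e1.1 e1.2]) => [v Hv|H0].
      by apply: Hcong; exact: uses_grid (Hgp v) Hv.
    by rewrite (eq_card0 H0).
  - apply: leq_trans kpos.
    rewrite -(card1 u); apply: subset_leq_card; apply/subsetP => v; rewrite !inE => /andP[h1 h2].
    case ntv : (nt v).
      have := hi_le v ntv; move: h2; rewrite /lo ntu; lia.
    move: h1 h2; rewrite /lo /hi ntu ntv => h1 h2.
    have : enum_rank v = enum_rank u by apply/val_inj/eqP; move: h1 h2; rewrite !leq_add2l => h1 h2; rewrite eqn_leq h1 h2.
    by move/enum_rank_inj ->.
have [col Hcol] := colour_lemma kpos lohi key.
exists T, (fun v => Raxioms.INR (lo v)), (fun v => Raxioms.INR (hi v)), col, id.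
split; [|split; [|split]].
- by move=> u; apply: RIneq.le_INR; apply/leP/lohi.
- by move=> u u' uu' [m1 m2]; apply: Hcol => //; apply/leP; apply: RIneq.INR_le.
- by move=> x y.
- move=> x y exy.
  have xy : x != y by apply/eqP => E; subst; rewrite eirr in exy.
  split => //.
  have [a [b [ux uy]]] := (Hrep x y xy).1 exy.
  have /andP[ax ntx] := uses_mem ux; have /andP[ay nty] := uses_mem uy.
  have /andP[l1 u1] := lo_le x a ntx ax; have /andP[l2 u2] := lo_le y a nty ay.
  by split; apply: RIneq.le_INR; apply/leP; [exact: leq_trans l1 u2 | exact: leq_trans l2 u1].
Qed.
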